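(* Let $\phi\in X$ and let $u$ be the global viscosity solution of (VHJ). Let $\omega$ be an open subset of $\Omega$, $t_2>t_1\ge0$, $Q=\omega\times(t_1,t_2)$. Assume $w\in C^{2,1}(Q)\cap C(\overline Q)$ satisfies $w_t-\Delta w\ge|\nabla w|^p$ in $Q$, $w\ge0$ on $(\overline\omega\cap\partial\Omega)\times(t_1,t_2)$, $w\ge u$ on $(\Omega\cap\partial\omega)\times(t_1,t_2)$, and $w(\cdot,t_1)\ge u(\cdot,t_1)$ in $\omega$. Then $w\ge u$ in $\overline Q$.
   Context: $\Omega\subset\mathbb R^n$ smoothly bounded, $p>2$. (VHJ): $u_t-\Delta u=|\nabla u|^p$ in $\Omega\times(0,\infty)$, $u=0$ on $\partial\Omega\times(0,\infty)$, $u(\cdot,0)=\phi$. $X=\{\phi\in C^1(\overline\Omega):\phi\ge0,\ \phi=0\text{ on }\partial\Omega\}$. The global viscosity solution $u\in C(\overline\Omega\times[0,\infty))$ is the pointwise nondecreasing limit, as $k\to\infty$, of the global classical solutions $u_k$ of the truncated problems $\partial_tu_k-\Delta u_k=F_k(|\nabla u_k|^2)$ in $\Omega\times(0,\infty)$, $u_k=0$ on $\partial\Omega$, $u_k(\cdot,0)=\phi$, where $F_k(s)=\min(s^{p/2},k^{(p-2)/2}s)$; in particular $u$ may be positive on parts of $\partial\Omega$. *)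

(* Defs.v *)
From HB Require Import structures.
From mathcomp Require Import all_boot all_order all_algebra.
From mathcomp Require Import all_classical all_reals all_analysis.
Set Implicit Arguments. Unset Strict Implicit. Unset Printing Implicit Defensive.
Import Order.TTheory GRing.Theory Num.Theory.
Import numFieldNormedType.Exports.
Local Open Scope classical_set_scope.
Local Open Scope ring_scope.

Section VHJ.
Variables (R : realType) (n : nat).
Notation V := 'rV[R]_n.

Definition evec (i : 'I_n) : V := delta_mx 0 i.

Definition partial (f : V -> R) (i : 'I_n) (x : V) : R := derive f x (evec i).

Definition gradsq (f : V -> R) (x : V) : R := \sum_(i < n) (partial f i x) ^+ 2.

Definition lap (f : V -> R) (x : V) : R :=
  \sum_(i < n) partial (partial f i) i x.

Fixpoint iterD (s : seq V) (f : V -> R) : V -> R :=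
  match s with
  | [::] => f
  | v :: s' => fun x => derive (iterD s' f) x v
  end.

Definition smooth (f : V -> R) : Prop :=
  forall s : seq V, continuous (iterD s f) /\
    (forall (v x : V), derivable (iterD s f) x v).

(* Omega is a bounded open set with C^infty boundary (local defining function) *)
Definition smoothly_bounded (Om : set V) : Prop :=
  open Om /\ bounded_set Om /\
  forall x0, (closure Om `\` Om) x0 ->
    exists (r : R) (rho : V -> R), 0 < r /\ smooth rho /\
      (exists i, partial rho i x0 != 0) /\
      forall x, ball x0 r x -> (Om x <-> rho x < 0).

Definition C1_closure (Om : set V) (f : V -> R) : Prop :=
  {within closure Om, continuous f} /\
  (forall x, Om x -> forall v, derivable f x v) /\
  forall i, exists g : V -> R, {within closure Om, continuous g} /\
    forall x, Om x -> g x = partial f i x.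

Definition Xdata (Om : set V) (phi : V -> R) : Prop :=
  C1_closure Om phi /\ (forall x, closure Om x -> 0 <= phi x) /\
  (forall x, (closure Om `\` Om) x -> phi x = 0).

Definition dt (w : V -> R -> R) (x : V) (t : R) : R := derive1 (fun s => w x s) t.
Definition dx (w : V -> R -> R) (i : 'I_n) (x : V) (t : R) : R :=
  partial (fun y => w y t) i x.
Definition dxx (w : V -> R -> R) (i j : 'I_n) (x : V) (t : R) : R :=
  partial (fun y => dx w i y t) j x.
Definition gradsq_x (w : V -> R -> R) (x : V) (t : R) : R := gradsq (fun y => w y t) x.
Definition lap_x (w : V -> R -> R) (x : V) (t : R) : R := lap (fun y => w y t) x.

Definition uncurry2 (w : V -> R -> R) : V * R -> R := fun z => w z.1 z.2.

Definition C21 (D : set V) (I : set R) (w : V -> R -> R) : Prop :=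
  forall x t, D x -> I t ->
    [/\ derivable (fun s => w x s) t 1,
        (forall v, derivable (fun y => w y t) x v),
        (forall i v, derivable (fun y => dx w i y t) x v),
        {for (x, t), continuous (uncurry2 w)} &
        [/\
        {for (x, t), continuous (uncurry2 (dt w))},
        (forall i, {for (x, t), continuous (uncurry2 (dx w i))}) &
        (forall i j, {for (x, t), continuous (uncurry2 (dxx w i j))})]].

Definition Cset (A : set (V * R)) (w : V -> R -> R) : Prop :=
  {within A, continuous (uncurry2 w)}.

Definition C10 (A B : set (V * R)) (w : V -> R -> R) : Prop :=
  forall i, exists g : V -> R -> R, Cset A g /\
    forall x t, B (x, t) -> g x t = dx w i x t.

Definition Fk (p : R) (k : nat) (s : R) : R :=
  Num.min (s `^ (p / 2)) ((k%:R) `^ ((p - 2) / 2) * s).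

Definition trunc_classical_sol (Om : set V) (p : R) (k : nat) (phi : V -> R)
    (uk : V -> R -> R) : Prop :=
  C21 Om [set t | 0 < t] uk /\
  Cset (closure Om `*` [set t | 0 <= t]) uk /\
  C10 (closure Om `*` [set t | 0 < t]) (Om `*` [set t | 0 < t]) uk /\
  (forall x t, Om x -> 0 < t ->
     dt uk x t - lap_x uk x t = Fk p k (gradsq_x uk x t)) /\
  (forall x t, (closure Om `\` Om) x -> 0 < t -> uk x t = 0) /\
  (forall x, Om x -> uk x 0 = phi x).

(* u is the global viscosity solution of (VHJ): the pointwise nondecreasing limit
   of the global classical solutions u_k of the truncated problems *)
Definition global_viscosity_sol (Om : set V) (p : R) (phi : V -> R)
    (u : V -> R -> R) : Prop :=
  exists uk : nat -> V -> R -> R,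
    (forall k, trunc_classical_sol Om p k phi (uk k)) /\
    (forall x t, closure Om x -> 0 <= t ->
       {homo (fun k => uk k x t) : k l / (k <= l)%N >-> k <= l} /\
       (fun k => uk k x t) @ \oo --> u x t).

End VHJ.

(* Main.v *)
Require Import Defs.
From HB Require Import structures.
From mathcomp Require Import all_boot all_order all_algebra.
From mathcomp Require Import all_classical all_reals all_analysis.
Import Order.TTheory GRing.Theory Num.Theory.
Import numFieldNormedType.Exports.
Local Open Scope classical_set_scope.
Local Open Scope ring_scope.
From mathcomp Require Import ring lra.


Section G.
Variables (R : realType) (V : normedModType R).

Lemma derive_le_right (f : V -> R) (x v : V) (c : R) :
  derivable f x v -> (\forall h \near (0:R), 0 < h -> f (h *: v + x) - f x <= c * h) ->
  derive f x v <= c.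
Proof.
move=> df hn.
rewrite /derive (cvg_at_rightE (fun h : R => h^-1 *: ((f \o shift x) (h *: v) - f x))) //.
apply: limr_le.
  rewrite -(cvg_at_rightE (fun h : R => h^-1 *: ((f \o shift x) (h *: v) - f x))) //.
  apply: cvg_trans df; apply: cvg_app.
  move=> A [e egt0 Ae]; exists e => // y ye ygt0; apply: Ae => //.
  exact/lt0r_neq0.
move: hn => [e e0 He]; exists e => // h he hgt0.
rewrite /= /GRing.scale /= mulrC ler_pdivrMr //; exact: He.
Qed.

Lemma derive_ge_left (f : V -> R) (x v : V) (c : R) :
  derivable f x v -> (\forall h \near (0:R), h < 0 -> f (h *: v + x) - f x <= c * h) ->
  c <= derive f x v.
Proof.
move=> df hn.
rewrite /derive (cvg_at_leftE (fun h : R => h^-1 *: ((f \o shift x) (h *: v) - f x))) //.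
apply: limr_ge.
  rewrite -(cvg_at_leftE (fun h : R => h^-1 *: ((f \o shift x) (h *: v) - f x))) //.
  apply: cvg_trans df; apply: cvg_app.
  move=> A [e egt0 Ae]; exists e => // y ye ygt0; apply: Ae => //.
  exact/ltr0_neq0.
move: hn => [e e0 He]; exists e => // h he hgt0.
rewrite /= /GRing.scale /= mulrC ler_ndivlMr //; exact: He.
Qed.

Lemma derive_max0 (f : V -> R) (x v : V) :
  derivable f x v -> (\forall h \near (0:R), f (h *: v + x) <= f x) ->
  derive f x v = 0.
Proof.
move=> df hn; apply/eqP; rewrite eq_le; apply/andP; split.
  apply: derive_le_right => //; apply: filterS hn => h hh _.
  by rewrite mul0r subr_le0.
apply: derive_ge_left => //; apply: filterS hn => h hh _.
by rewrite mul0r subr_le0.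
Qed.

Lemma near_line (A : set V) (x e : V) : open A -> A x ->
  \forall h \near (0:R), A (h *: e + x).
Proof.
move=> oA Ax.
have hc : (fun h : R => h *: e + x) @ (0:R) --> x.
  rewrite -[X in _ --> X](add0r x) -[X in _ --> X + _](scale0r e).
  apply: cvgD; last exact: cvg_cst.
  apply: cvgZl; exact: cvg_id.
apply: hc; exact: open_nbhs_nbhs.
Qed.
Lemma line_quot (f : V -> R) (x e : V) (s : R) :
  (fun h : R => h^-1 *: (((fun r : R => f (r *: e + x)) \o shift s) (h *: 1) - f (s *: e + x)))
  = (fun h : R => h^-1 *: ((f \o shift (s *: e + x)) (h *: e) - f (s *: e + x))).
Proof.
apply: funext => h /=; congr (_ *: (f _ - _)).
by rewrite /shift /= [h *: 1]mulr1 scalerDl addrA.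
Qed.

Lemma line_derive (f : V -> R) (x e : V) (s : R) :
  derivable f (s *: e + x) e ->
  is_derive s 1 (fun r : R => f (r *: e + x)) (derive f (s *: e + x) e).
Proof.
move=> df; split.
  by rewrite /derivable line_quot.
by rewrite /derive line_quot.
Qed.

Lemma second_max (f H : V -> R) (x e : V) :
  (\forall h \near (0:R), f (h *: e + x) <= f x /\ derivable f (h *: e + x) e
        /\ derive f (h *: e + x) e = H (h *: e + x)) ->
  H x = 0 -> derivable H x e -> derive H x e <= 0.
Proof.
move=> hn Hx0 dH; rewrite leNgt; apply/negP => L0.
have q0 : \forall h \near (0:R)^', 0 < h^-1 *: ((H \o shift x) (h *: e) - H x).
  have dH' : (fun h : R => h^-1 *: ((H \o shift x) (h *: e) - H x)) @ (0:R)^' --> derive H x e := dH.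
  exact: (cvgr_gt _ dH' _ L0).
move: hn q0 => [d1 d10 Hd1] [d2 d20 Hd2].
pose b := Num.min d1 d2 / 2.
have b0 : 0 < b by rewrite divr_gt0 // lt_min d10.
have bd1 : b < d1.
  apply: (lt_le_trans _ (_ : Num.min d1 d2 <= d1)); last by rewrite ge_min lexx => //.
  by rewrite ltr_pdivrMr // ltr_pMr ?lt_min ?d10 // ltr1n.
have bd2 : b < d2.
  apply: (lt_le_trans _ (_ : Num.min d1 d2 <= d2)); last by rewrite ge_min lexx orbT => //.
  by rewrite ltr_pdivrMr // ltr_pMr ?lt_min ?d10 // ltr1n.
have inb r : 0 <= r -> r <= b -> ball (0:R) d1 r /\ ball (0:R) d2 r.
  move=> r0 rb; rewrite /ball /= sub0r normrN ger0_norm //.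
  by split; apply: le_lt_trans rb _.
have [c cb] : exists2 c, c \in `]0, b[%R &
    f (b *: e + x) - f (0 *: e + x) = H (c *: e + x) * (b - 0).
  apply: (@MVT R (fun r : R => f (r *: e + x)) (fun r : R => H (r *: e + x)) 0 b b0).
    move=> r; rewrite in_itv /= => /andP[r0 rb].
    have [/Hd1 [_ [dr Dr]] _] := inb r (ltW r0) (ltW rb).
    by rewrite -Dr; apply: line_derive.
  apply: derivable_within_continuous => r; rewrite in_itv /= => /andP[r0 rb].
  have [/Hd1 [_ [dr Dr]] _] := inb r r0 rb.
  by have [] := @line_derive f x e r dr.
move: cb; rewrite in_itv /= => /andP[c0 cb].
have [_ /Hd2 /(_ (lt0r_neq0 c0))] := inb c (ltW c0) (ltW cb).
rewrite /= Hx0 subr0 => Hc.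
have [/Hd1 [fb _] _] := inb b (ltW b0) (lexx b).
rewrite scale0r add0r subr0 => E.
have : 0 < f (b *: e + x) - f x.
  rewrite E mulr_gt0 //.
  have := Hc; rewrite /shift /= addrC => /(mulr_gt0 c0).
  by rewrite /GRing.scale /= mulrA mulfV ?mul1r // lt0r_neq0.
by rewrite subr_gt0 ltNge fb.
Qed.
End G.
Lemma CL (R : realType) (T : topologicalType) (A : set T) (f : T -> R) q :
  {within A, continuous f} -> A q ->
  (forall N, nbhs q N -> exists r, [/\ A r, N r & f r <= 0]) -> f q <= 0.
Proof.
move=> cf Aq H; rewrite leNgt; apply/negP => fq0.
have := (proj1 (subspace_continuousP _ _) cf) q Aq.
move=> /cvgr_gt /(_ _ fq0) hn.
have [r [Ar Nr fr]] := H _ hn.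
by move: (Nr Ar); rewrite ltNge fr.
Qed.

Lemma compact_closure_bdd (R : realType) n (A : set 'rV[R]_n) :
  bounded_set A -> compact (closure A).
Proof.
move=> [M [Mreal HM]].
have sub : closure A `<=` closed_ball_ Num.norm 0 (M + 1).
  rewrite [X in _ `<=` X](closure_id _).1; last exact: closed_closed_ball_.
  apply: closureS => x Ax; rewrite /closed_ball_ /= ?sub0r ?normrN.
  by apply: (HM (M + 1)) => //; rewrite ltrDl.
apply: bounded_closed_compact; last exact: closed_closure.
exists (M + 1); split; first by rewrite realD // real1.
move=> y My x /sub; rewrite /closed_ball_ /= ?sub0r ?normrN => /le_trans; apply.
exact: ltW.
Qed.

Section M.
Variables (R : realType) (n : nat).
Notation V := 'rV[R]_n.

Lemma step_eps (Om om : set V) (p : R) (k : nat) (phi : V -> R) (v u w : V -> R -> R)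
    (t1 t2 T eps : R) :
  trunc_classical_sol Om p k phi v ->
  (forall x t, closure Om x -> 0 <= t -> v x t <= u x t) ->
  open om -> om `<=` Om -> 0 <= t1 -> t1 <= T -> T < t2 -> 0 < eps ->
  bounded_set Om ->
  C21 om [set t | t1 < t < t2] w ->
  Cset (closure om `*` [set t | t1 <= t <= t2]) w ->
  (forall x t, om x -> t1 < t < t2 -> dt w x t - lap_x w x t >= gradsq_x w x t `^ (p / 2)) ->
  (forall x t, (closure om `&` (closure Om `\` Om)) x -> t1 < t < t2 -> 0 <= w x t) ->
  (forall x t, (Om `&` (closure om `\` om)) x -> t1 < t < t2 -> u x t <= w x t) ->
  (forall x, om x -> u x t1 <= w x t1) ->
  forall x t, closure om x -> t1 <= t <= T -> v x t - w x t - eps * (t - t1) <= 0.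
Proof.
move=> hv hvu oom omOm t10 t1T Tt2 eps0 bOm hw cw eqw bdw latw iniw x t cx tT.
have [hvC [hvc [_ [hveq [hvbd _]]]]] := hv.
pose z := fun q : V * R => v q.1 q.2 - w q.1 q.2 - eps * (q.2 - t1).
pose K := closure om `*` [set s | t1 <= s <= T].
have bom : bounded_set om.
  case: bOm => M [Mr HM]; exists M; split => // y My a /omOm; exact: HM.
have cK : compact K.
  apply: compact_setX; first exact: compact_closure_bdd.
  have -> : [set s | t1 <= s <= T] = `[t1, T]%classic.
    by apply/seteqP; split => s /=; rewrite in_itv.
  exact: segment_compact.
have czK : {within K, continuous z}.
  have cv : {within K, continuous (uncurry2 v)}.
    apply: continuous_subspaceW hvc => -[a b] [/= ca /andP[t1b _]]; split => /=.
      exact: (closureS omOm).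
    exact: le_trans t1b.
  have cw' : {within K, continuous (uncurry2 w)}.
    apply: continuous_subspaceW cw => -[a b] [/= ca /andP[t1b bT]]; split => //=.
    by rewrite t1b /= (le_trans bT (ltW Tt2)).
  have ce : continuous (fun q : V * R => eps * (q.2 - t1)).
    move=> q; apply: (@continuousM _ _ (fun=> eps) (fun q : V * R => q.2 - t1)).
      exact: cst_continuous.
    apply: (@continuousB _ _ _ (fun q : V * R => q.2) (fun=> t1)); last exact: cst_continuous.
    exact: cvg_snd.
  move=> q.
  apply: (@continuousB _ _ (subspace K) (fun q : V * R => v q.1 q.2 - w q.1 q.2)
     (fun q : V * R => eps * (q.2 - t1))).
    by apply: (@continuousB _ _ (subspace K) (uncurry2 v) (uncurry2 w)); [exact: cv|exact: cw'].
  exact: (continuous_subspaceT ce).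
have Kxt : K (x, t) by split.
have [[x0 t0] cK' cmax] := compact_EVT_max (ex_intro _ _ Kxt) cK czK.
have zle : z (x, t) <= z (x0, t0) by apply: cmax; rewrite inE.
suff : z (x0, t0) <= 0 by apply: le_trans.
move: cK'; rewrite inE => -[/= cx0 /andP[t10' t0T]].
rewrite leNgt; apply/negP => zc0.
have [t0t1|t1t0] : t0 = t1 \/ t1 < t0.
  by move: t10'; rewrite le_eqVlt => /orP[/eqP ->|->]; [left|right].
  subst t0.
  have Kx0 : K (x0, t1) by split => //=; rewrite lexx.
  suff : z (x0, t1) <= 0 by rewrite leNgt zc0.
  apply: (@CL R _ K z (x0, t1) czK Kx0).
  move=> N [[N1 N2] /= [N1x N2t] sub].
  have [y [omy N1y]] := cx0 _ N1x.
  exists (y, t1); split.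
  - by split => /=; [exact: subset_closure | rewrite lexx].
  - by apply: sub; split => //=; exact: nbhs_singleton.
  rewrite /z /= subrr mulr0 subr0 subr_le0.
  apply: le_trans (iniw y omy); apply: hvu => //.
  exact/subset_closure/omOm.
have t0t2 : t0 < t2 by apply: le_lt_trans Tt2.
have t00 : 0 < t0 by apply: le_lt_trans t1t0.
have t0in : t1 < t0 < t2 by rewrite t1t0.
have ept : 0 <= eps * (t0 - t1) by apply: mulr_ge0; [exact: ltW | rewrite subr_ge0 ltW].
have [omx0|nomx0] := pselect (om x0); last first.
  suff : v x0 t0 - w x0 t0 <= 0.
    move=> H; move: zc0; rewrite /z /= => /lt_le_trans /(_ (lerB H ept)).
    by rewrite subr0 ltxx.
  have [Omx0|nOmx0] := pselect (Om x0).
    rewrite subr_le0; apply: le_trans (latw x0 t0 _ t0in) => //.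
    apply: hvu; [exact: closureS omOm x0 cx0 | exact: ltW].
  have bx0 : (closure Om `\` Om) x0 by split => //; exact: closureS omOm x0 cx0.
  rewrite hvbd // sub0r oppr_le0; exact: bdw.
have Omx0 : Om x0 := omOm _ omx0.
have [dvt dvx dvxx _ _] := hvC x0 t0 Omx0 t00.
have [dwt dwx dwxx _ _] := hw x0 t0 omx0 t0in.
have Cv y e : om y -> derivable (fun y => v y t0) y e.
  by move=> omy; have [_ dv _ _ _] := hvC y t0 (omOm _ omy) t00.
have Cw y e : om y -> derivable (fun y => w y t0) y e.
  by move=> omy; have [_ dw _ _ _] := hw y t0 omy t0in.
have zloc y : om y -> v y t0 - w y t0 <= v x0 t0 - w x0 t0.
  move=> omy.
  have Ky : (y, t0) \in K.
    by rewrite inE; split => /=; [exact: subset_closure | rewrite (ltW t1t0) t0T].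
  by have := cmax _ Ky; rewrite /z /= lerD2r.
have tdt : eps <= dt v x0 t0 - dt w x0 t0.
  rewrite /dt !derive1E -deriveB //.
  apply: derive_ge_left; first exact: derivableB.
  exists (t0 - t1); first by rewrite /= subr_gt0.
  move=> h /= hb hn.
  have e1 : h *: (1:R) + t0 = h + t0 by rewrite -[h *: 1]/(h * 1) mulr1.
  rewrite e1.
  have habs : - h < t0 - t1.
    by move: hb; rewrite sub0r normrN ltr0_norm.
  have Ks : (x0, h + t0) \in K.
    rewrite inE; split => //=; apply/andP; split; lra.
  have := cmax _ Ks; rewrite /z /= => H.
  rewrite !mulrBr mulrDr in H.
  change (v x0 (h + t0) - w x0 (h + t0) - (v x0 t0 - w x0 t0) <= eps * h); lra.
have grad i : dx v i x0 t0 = dx w i x0 t0.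
  apply/eqP; rewrite -subr_eq0; apply/eqP.
  rewrite /dx /partial -deriveB; [|exact: dvx|exact: dwx].
  apply: derive_max0; first by apply: derivableB.
  move: (@near_line R _ om x0 (@evec R n i) oom omx0); apply: filterS => h omh /=.
  exact: zloc.
have lapi i : dxx v i i x0 t0 - dxx w i i x0 t0 <= 0.
  rewrite /dxx /partial -deriveB; [|exact: dvxx|exact: dwxx].
  apply: (@second_max R _ ((fun y => v y t0) - (fun y => w y t0))).
  - move: (@near_line R _ om x0 (@evec R n i) oom omx0); apply: filterS => h omh /=.
    split; first exact: zloc.
    split; first by apply: derivableB; [exact: Cv | exact: Cw].
    by rewrite deriveB; [|exact: Cv|exact: Cw].
  - by change (dx v i x0 t0 - dx w i x0 t0 = 0); rewrite grad subrr.
  - exact: derivableB.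
have lapd : lap_x v x0 t0 - lap_x w x0 t0 <= 0.
  rewrite /lap_x /lap -sumrB; apply: sumr_le0 => i _; exact: lapi i.
have gradeq : gradsq_x v x0 t0 = gradsq_x w x0 t0.
  rewrite /gradsq_x /gradsq; apply: eq_bigr => i _.
  by have := grad i; rewrite /dx => ->.
have Fle : Fk p k (gradsq_x v x0 t0) <= gradsq_x v x0 t0 `^ (p / 2).
  by rewrite /Fk ge_min lexx.
have E1 := hveq x0 t0 Omx0 t00.
have E2 := eqw x0 t0 omx0 t0in.
rewrite gradeq in Fle E1.
lra.
Qed.
End M.

Section M2.
Variables (R : realType) (n : nat).
Notation V := 'rV[R]_n.

Lemma eps_le0 (d c : R) : 0 <= c -> (forall eps, 0 < eps -> d <= eps * c) -> d <= 0.
Proof.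
move=> c0 H; rewrite leNgt; apply/negP => d0.
have c1 : 0 < c + 1 by rewrite ltr_wpDl.
have := H (d / (c + 1)) (divr_gt0 d0 c1).
rewrite mulrAC ler_pdivlMr // mulrDr mulr1 => H'.
lra.
Qed.

Lemma vk_le_w (Om om : set V) (p : R) (k : nat) (phi : V -> R) (v u w : V -> R -> R)
    (t1 t2 : R) :
  trunc_classical_sol Om p k phi v ->
  (forall x t, closure Om x -> 0 <= t -> v x t <= u x t) ->
  open om -> om `<=` Om -> 0 <= t1 -> t1 < t2 ->
  bounded_set Om ->
  C21 om [set t | t1 < t < t2] w ->
  Cset (closure om `*` [set t | t1 <= t <= t2]) w ->
  (forall x t, om x -> t1 < t < t2 -> dt w x t - lap_x w x t >= gradsq_x w x t `^ (p / 2)) ->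
  (forall x t, (closure om `&` (closure Om `\` Om)) x -> t1 < t < t2 -> 0 <= w x t) ->
  (forall x t, (Om `&` (closure om `\` om)) x -> t1 < t < t2 -> u x t <= w x t) ->
  (forall x, om x -> u x t1 <= w x t1) ->
  forall x t, closure om x -> t1 <= t <= t2 -> v x t <= w x t.
Proof.
move=> hv hvu oom omOm t10 t12 bOm hw cw eqw bdw latw iniw.
have lt x t : closure om x -> t1 <= t < t2 -> v x t <= w x t.
  move=> cx /andP[t1t tt2]; rewrite -subr_le0.
  apply: (@eps_le0 _ (t - t1)); first by rewrite subr_ge0.
  move=> eps eps0; rewrite -subr_le0.
  apply: (@step_eps R n Om om p k phi v u w t1 t2 t eps) => //.
  by rewrite t1t lexx.
move=> x t cx /andP[t1t tt2].
have [tt2'|] := ltP t t2; first by apply: lt => //; rewrite t1t.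
move=> t2t; have -> : t = t2 by apply/eqP; rewrite eq_le tt2 t2t.
rewrite -subr_le0.
have [hvC [hvc _]] := hv.
pose K := closure om `*` [set s | t1 <= s <= t2].
pose d := fun q : V * R => v q.1 q.2 - w q.1 q.2.
have cd : {within K, continuous d}.
  have cv : {within K, continuous (uncurry2 v)}.
    apply: continuous_subspaceW hvc => -[a b] [/= ca /andP[t1b _]]; split => /=.
      exact: (closureS omOm).
    exact: le_trans t1b.
  move=> q.
  by apply: (@continuousB _ _ (subspace K) (uncurry2 v) (uncurry2 w)); [exact: cv|exact: cw].
have Kx : K (x, t2) by split => //=; rewrite (ltW t12) lexx.
apply: (@CL R _ K d (x, t2) cd Kx).
move=> N [[N1 N2] /= [N1x [e e0 N2t]] sub].
pose s := t2 - Num.min e (t2 - t1) / 2.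
have m0 : 0 < Num.min e (t2 - t1) by rewrite lt_min e0 subr_gt0.
have me : Num.min e (t2 - t1) <= e by rewrite ge_min lexx.
have mt : Num.min e (t2 - t1) <= t2 - t1 by rewrite ge_min lexx orbT.
have s1 : t1 < s by rewrite /s; lra.
have s2 : s < t2 by rewrite /s; lra.
exists (x, s); split.
- by split => //=; rewrite !ltW.
- apply: sub; split => /=; first exact: nbhs_singleton.
  apply: N2t => /=.
  rewrite /s opprB addrC subrK ger0_norm; first lra.
  by rewrite divr_ge0 // ltW.
- by rewrite /d /= subr_le0; apply: lt => //; rewrite !ltW ?s2 // s1.
Qed.
End M2.

Theorem proposition2p2 (R : realType) (n : nat) (Om : set 'rV[R]_n) (p : R)
    (phi : 'rV[R]_n -> R) (u : 'rV[R]_n -> R -> R)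
    (om : set 'rV[R]_n) (t1 t2 : R) (w : 'rV[R]_n -> R -> R) :
  smoothly_bounded Om -> 2 < p ->
  Xdata Om phi ->
  global_viscosity_sol Om p phi u ->
  open om -> om `<=` Om -> 0 <= t1 -> t1 < t2 ->
  C21 om [set t | t1 < t < t2] w ->
  Cset (closure om `*` [set t | t1 <= t <= t2]) w ->
  (forall x t, om x -> t1 < t < t2 ->
     dt w x t - lap_x w x t >= gradsq_x w x t `^ (p / 2)) ->
  (forall x t, (closure om `&` (closure Om `\` Om)) x -> t1 < t < t2 -> 0 <= w x t) ->
  (forall x t, (Om `&` (closure om `\` om)) x -> t1 < t < t2 -> u x t <= w x t) ->
  (forall x, om x -> u x t1 <= w x t1) ->
  forall x t, closure om x -> t1 <= t <= t2 -> u x t <= w x t.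
Proof.
move=> sbOm p2 Xphi [uk [huk hlim]] oom omOm t10 t12 hw cw eqw bdw latw iniw x t cx tt.
have bOm : bounded_set Om := sbOm.2.1.
have cxOm : closure Om x by apply: (closureS omOm).
have t0 : 0 <= t by move/andP: tt => [t1t _]; exact: le_trans t1t.
have [hom hcv] := hlim x t cxOm t0.
apply: (cvgr_to_le hcv); apply: nearW => m.
apply: (@vk_le_w R n Om om p m phi (uk m) u w t1 t2) => //.
move=> y s cy s0; have [hom' hcv'] := hlim y s cy s0.
apply: (cvgr_to_ge hcv'); exists m => // l /= ml; exact: hom' ml.
Qed.
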